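(* Let $d\ge 2$, $n\ge 2$, let $\mathcal G$ be an undirected graph on $\{1,\dots,n\}$ with $m$ edges, assumed acyclic and having a spanning tree, with an arbitrary orientation (incidence matrix $H$, $\bar H=H\otimes I_d$), and let $p(t)\in\mathbb R^{dn}$ be a time-varying configuration with well-defined bearings $g_k(t)$. Then the formation $\mathcal G(p(t))$ is bearing persistently exciting if and only if $g_k(t)$ is persistently exciting for all $k\in\{1,\dots,m\}$.
   Context: $e=\bar Hp=[e_1^\top,\dots,e_m^\top]^\top$, $g_k=e_k/\|e_k\|$. For $y\in\mathbb S^{d-1}$, $\pi_y=I_d-yy^\top$. $\Pi(t)=\mathrm{blkdiag}(\pi_{g_k(t)})$, $L=\bar H^\top\bar H$, $L_B(t)=\bar H^\top\Pi(t)\bar H$. A direction $y(t)\in\mathbb S^{d-1}$ is PE if there exist $T,\mu>0$ with $\int_t^{t+T}\pi_{y(\tau)}d\tau\ge\mu I_d$ for all $t$. $L_B$ is PE if there exist $T,\mu>0$ with $\int_t^{t+T}L_B(\tau)d\tau\ge\mu L$ for all $t$. The formation is bearing persistently exciting (BPE) if $\mathcal G$ has a spanning tree and $L_B$ is PE. *)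

(* Defs.v *)
From HB Require Import structures.
From mathcomp Require Import all_boot all_order all_algebra.
From mathcomp Require Import all_classical all_reals all_analysis.
From mathcomp Require Import mxtens.
Set Implicit Arguments. Unset Strict Implicit. Unset Printing Implicit Defensive.
Import Order.TTheory GRing.Theory Num.Theory.
Import numFieldNormedType.Exports.
Local Open Scope ring_scope.

Section Defs.
Variable R : realType.

(* An oriented graph on 'I_n with m edges: edge k goes from (E k).1 (tail)
   to (E k).2 (head). *)
Definition edge_list (n m : nat) := 'I_m -> 'I_n * 'I_n.

Definition simple_graph n m (E : edge_list n m) : Prop :=
  (forall k, (E k).1 != (E k).2) /\
  (forall k l, k != l ->
     ~ ((E k = E l) \/ (E k = ((E l).2, (E l).1)))).

Definition adj_in n m (E : edge_list n m) (S : {set 'I_m}) : rel 'I_n :=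
  fun u v => [exists k in S, (E k == (u, v)) || (E k == (v, u))].

(* Acyclic: no cycle of >= 3 distinct vertices (the graph being simple). *)
Definition acyclic_in n m (E : edge_list n m) (S : {set 'I_m}) : Prop :=
  forall s : seq 'I_n, uniq s -> (3 <= size s)%N -> ~~ cycle (adj_in E S) s.

Definition connected_in n m (E : edge_list n m) (S : {set 'I_m}) : Prop :=
  forall u v : 'I_n, connect (adj_in E S) u v.

Definition acyclic n m (E : edge_list n m) : Prop := acyclic_in E [set: 'I_m].

Definition has_spanning_tree n m (E : edge_list n m) : Prop :=
  exists S : {set 'I_m}, connected_in E S /\ acyclic_in E S.

(* Incidence matrix H (m x n): H k i = -1 if i is the tail of edge k,
   +1 if i is its head, 0 otherwise (so e_k = p_head - p_tail). *)
Definition incidence n m (E : edge_list n m) : 'M[R]_(m, n) :=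
  \matrix_(k, i) ((i == (E k).2)%:R - (i == (E k).1)%:R).

Definition Hbar n m d (E : edge_list n m) : 'M[R]_(m * d, n * d) :=
  tensmx (incidence E) (1%:M : 'M[R]_d).

Definition enorm d (v : 'cV[R]_d) : R := Num.sqrt (\sum_a v a 0 ^+ 2).

Definition evec n m d (E : edge_list n m) (p : 'cV[R]_(n * d)) : 'cV[R]_(m * d) :=
  Hbar d E *m p.
Definition eblock n m d (E : edge_list n m) (p : 'cV[R]_(n * d)) (k : 'I_m)
  : 'cV[R]_d := \col_a (evec E p) (mxtens_index (k, a)) 0.

Definition bearing n m d (E : edge_list n m) (p : 'cV[R]_(n * d)) (k : 'I_m)
  : 'cV[R]_d := (enorm (eblock E p k))^-1 *: eblock E p k.

Definition proj_orth d (y : 'cV[R]_d) : 'M[R]_d := 1%:M - y *m y^T.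

(* Pi = blkdiag(pi_{g_k}) *)
Definition PiB n m d (E : edge_list n m) (p : 'cV[R]_(n * d)) : 'M[R]_(m * d) :=
  \sum_(k < m) tensmx (delta_mx k k) (proj_orth (bearing E p k)).

Definition Lap n m d (E : edge_list n m) : 'M[R]_(n * d) :=
  (Hbar d E)^T *m Hbar d E.

Definition LapB n m d (E : edge_list n m) (p : 'cV[R]_(n * d)) : 'M[R]_(n * d) :=
  (Hbar d E)^T *m PiB E p *m Hbar d E.

Definition mxint p q (a b : R) (F : R -> 'M[R]_(p, q)) : 'M[R]_(p, q) :=
  \matrix_(i, j) (\int[lebesgue_measure]_(t in `[a, b]) F t i j).

Definition loewner_ge k (A B : 'M[R]_k) : Prop :=
  forall x : 'cV[R]_k, (x^T *m B *m x) 0 0 <= (x^T *m A *m x) 0 0.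

Definition PE_dir d (y : R -> 'cV[R]_d) : Prop :=
  exists T mu : R, 0 < T /\ 0 < mu /\
    forall t : R, loewner_ge (mxint t (t + T) (fun tau => proj_orth (y tau)))
                             (mu *: 1%:M).

Definition PE_LB n m d (E : edge_list n m) (p : R -> 'cV[R]_(n * d)) : Prop :=
  exists T mu : R, 0 < T /\ 0 < mu /\
    forall t : R, loewner_ge (mxint t (t + T) (fun tau => LapB E (p tau)))
                             (mu *: Lap d E).

Definition BPE n m d (E : edge_list n m) (p : R -> 'cV[R]_(n * d)) : Prop :=
  has_spanning_tree E /\ PE_LB E p.

End Defs.

(* Main.v *)
Require Import Defs.
From HB Require Import structures.
From mathcomp Require Import all_boot all_order all_algebra.
From mathcomp Require Import all_classical all_reals all_analysis.
From mathcomp Require Import mxtens.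
From mathcomp Require Import measurable_realfun lra.
Import Order.TTheory GRing.Theory Num.Theory.
Local Open Scope ring_scope.
Set Implicit Arguments. Unset Strict Implicit. Unset Printing Implicit Defensive.

Section Good.
Variable R : realType.
Notation mu := (@lebesgue_measure R).

Definition good (f : R -> R) :=
  measurable_fun setT f /\ exists M : R, forall t, `|f t| <= M.

Lemma good_cst (c : R) : good (fun _ => c).
Proof. by split; [exact: measurable_cst | exists `|c|]. Qed.

Lemma goodD {f g} : good f -> good g -> good (fun t => f t + g t).
Proof.
case=> mf [M hM] [mg [N hN]]; split; first exact: measurable_funD.
by exists (M + N) => t; rewrite (le_trans (ler_normD _ _)) // lerD.
Qed.

Lemma goodMul {f g} : good f -> good g -> good (fun t => f t * g t).
Proof.
case=> mf [M hM] [mg [N hN]]; split; first exact: measurable_funM.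
by exists (M * N) => t; rewrite normrM ler_pM.
Qed.

Lemma goodN {f} : good f -> good (fun t => - f t).
Proof.
move=> gf; have := goodMul (good_cst (-1)) gf.
by congr good; apply/funext => t; rewrite mulN1r.
Qed.

Lemma goodB {f g} : good f -> good g -> good (fun t => f t - g t).
Proof. by move=> gf gg; apply: goodD => //; exact: goodN. Qed.

Lemma good_sum_seq (I : Type) (s : seq I) (F : I -> R -> R) :
  (forall i, good (F i)) -> good (fun t => \sum_(i <- s) F i t).
Proof.
move=> gF; elim: s => [|i s IH].
  rewrite (_ : (fun t => _) = fun _ => 0); first exact: good_cst.
  by apply/funext => t; rewrite big_nil.
rewrite (_ : (fun t => _) = fun t => F i t + \sum_(j <- s) F j t).
  exact: goodD.
by apply/funext => t; rewrite big_cons.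
Qed.

Lemma good_sum (I : finType) (F : I -> R -> R) :
  (forall i, good (F i)) -> good (fun t => \sum_i F i t).
Proof. by move=> gF; exact: good_sum_seq. Qed.

Lemma good_integrable (a b : R) f : good f ->
  mu.-integrable `[a, b] (EFin \o f).
Proof.
case=> mf [M hM]; apply: measurable_bounded_integrable.
- exact: measurable_itv.
- have := lebesgue_measure_itv `[a, b]; move=> /= ->; case: ifP => _ //.
  by rewrite -EFinD ltry.
- exact: measurable_funTS.
- exists M; split => [|M1 MM1 x _ /=]; first exact: num_real.
  exact: le_trans (hM x) (ltW MM1).
Qed.

Lemma Rint_sum_seq (a b : R) (I : Type) (s : seq I) (F : I -> R -> R) :
  (forall i, good (F i)) ->
  \int[mu]_(t in `[a, b]) (\sum_(i <- s) F i t) =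
  \sum_(i <- s) \int[mu]_(t in `[a, b]) F i t.
Proof.
move=> gF; elim: s => [|i s IH].
  under eq_Rintegral do rewrite big_nil.
  by rewrite big_nil /Rintegral integral0.
under eq_Rintegral do rewrite big_cons.
rewrite big_cons RintegralD //.
- by rewrite IH.
- exact: good_integrable.
- by apply: good_integrable; exact: good_sum_seq.
Qed.

Lemma Rint_sum (a b : R) (I : finType) (F : I -> R -> R) :
  (forall i, good (F i)) ->
  \int[mu]_(t in `[a, b]) (\sum_i F i t) =
  \sum_i \int[mu]_(t in `[a, b]) F i t.
Proof. by move=> gF; exact: Rint_sum_seq. Qed.

Lemma quadE p q (u : 'rV[R]_p) (M : 'M[R]_(p, q)) (v : 'cV[R]_q) :
  (u *m M *m v) 0 0 = \sum_i \sum_j u 0 i * M i j * v j 0.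
Proof.
rewrite !mxE; under eq_bigr do rewrite mxE big_distrl.
by rewrite exchange_big.
Qed.

Definition goodM p q (F : R -> 'M[R]_(p, q)) := forall i j, good (fun t => F t i j).

Lemma mxint_quad (a b : R) p q (F : R -> 'M[R]_(p, q)) (u : 'rV[R]_p) (v : 'cV[R]_q) :
  goodM F ->
  (u *m mxint a b F *m v) 0 0 = \int[mu]_(t in `[a, b]) (u *m F t *m v) 0 0.
Proof.
move=> gF; rewrite quadE; under eq_Rintegral do rewrite quadE.
have gi : forall i j, good (fun t => u 0 i * F t i j * v j 0).
  by move=> i j; apply: goodMul; [apply: goodMul => //; exact: good_cst | exact: good_cst].
rewrite Rint_sum; last by move=> i; apply: good_sum => j; exact: gi.
apply: eq_bigr => i _; rewrite Rint_sum //; apply: eq_bigr => j _.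
rewrite mxE RintegralZr //; last first.
  by apply: good_integrable; apply: goodMul => //; exact: good_cst.
rewrite RintegralZl //.
exact: good_integrable.
Qed.

End Good.


Section Meas.
Variable R : realType.

Lemma measurable_inv : measurable_fun setT (@GRing.inv R).
Proof.
rewrite -(setvU [set (0:R)]%classic).
apply/measurable_funU.
- by apply: measurableC; exact: measurable_set1.
- exact: measurable_set1.
split; last exact: measurable_fun_set1.
apply: open_continuous_measurable_fun.
  by apply: closed_openC; apply: compact_closed; [exact: Rhausdorff | exact: compact_set1].
move=> x; rewrite inE /= => x0; apply: inv_continuous; exact/eqP.
Qed.

Lemma meas_sum (I : finType) (F : I -> R -> R) :
  (forall i, measurable_fun setT (F i)) ->
  measurable_fun setT (fun t => \sum_i F i t).
Proof.
move=> mF; rewrite unlock /=; elim: (index_enum I) => [|i s IH] /=.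
  exact: measurable_cst.
exact: measurable_funD.
Qed.

Lemma enorm_sqr d (v : 'cV[R]_d) : enorm v ^+ 2 = \sum_a v a 0 ^+ 2.
Proof. by rewrite /enorm sqr_sqrtr // sumr_ge0 // => a _; exact: sqr_ge0. Qed.

Lemma enorm_gt0 d (v : 'cV[R]_d) : v != 0 -> 0 < enorm v.
Proof.
move=> v0; rewrite /enorm sqrtr_gt0.
have [a va] : exists a, v a 0 != 0.
  apply/existsP; apply: contraR v0; rewrite negb_exists => /forallP h.
  apply/eqP/matrixP => i j; rewrite (ord1 j) mxE; apply/eqP.
  by have := h i; rewrite negbK.
rewrite (bigD1 a) //=; apply: (@lt_le_trans _ _ (v a 0 ^+ 2)).
  by rewrite lt_neqAle sqr_ge0 andbT eq_sym sqrf_eq0.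
rewrite lerDl sumr_ge0 // => b _; exact: sqr_ge0.
Qed.

Lemma unit_sum d (v : 'cV[R]_d) : v != 0 ->
  \sum_a ((enorm v)^-1 *: v) a 0 ^+ 2 = 1.
Proof.
move=> v0; under eq_bigr do rewrite mxE exprMn.
rewrite -mulr_sumr -enorm_sqr exprVn mulVf //.
by rewrite expf_neq0 // gt_eqF // enorm_gt0.
Qed.

Lemma unit_le1 d (v : 'cV[R]_d) a : `|((enorm v)^-1 *: v) a 0| <= 1.
Proof.
have [->|v0] := eqVneq v 0; first by rewrite scaler0 mxE normr0.
have h : ((enorm v)^-1 *: v) a 0 ^+ 2 <= 1.
  rewrite -(unit_sum v0) (bigD1 a) //= lerDl sumr_ge0 // => b _.
  exact: sqr_ge0.
move: h; set x := _ a 0 => h.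
by rewrite ler_norml; apply/andP; split; nra.
Qed.

End Meas.

Section GoodM.
Variable R : realType.

Lemma goodM_cst p q (A : 'M[R]_(p, q)) : goodM (fun _ => A).
Proof. by move=> i j; exact: good_cst. Qed.

Lemma goodM_mul p q r (F : R -> 'M[R]_(p, q)) (G : R -> 'M[R]_(q, r)) :
  goodM F -> goodM G -> goodM (fun t => F t *m G t).
Proof.
move=> gF gG i j.
rewrite (_ : (fun t => _) = fun t => \sum_k F t i k * G t k j).
  by apply: good_sum => k; exact: goodMul.
by apply/funext => t; rewrite mxE.
Qed.

Lemma goodM_sum (I : finType) p q (F : I -> R -> 'M[R]_(p, q)) :
  (forall i, goodM (F i)) -> goodM (fun t => \sum_i F i t).
Proof.
move=> gF i j; rewrite (_ : (fun t => _) = fun t => \sum_k F k t i j).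
  by apply: good_sum => k; exact: gF.
by apply/funext => t; rewrite summxE.
Qed.

Lemma goodM_B p q (F G : R -> 'M[R]_(p, q)) :
  goodM F -> goodM G -> goodM (fun t => F t - G t).
Proof.
move=> gF gG i j; rewrite (_ : (fun t => _) = fun t => F t i j - G t i j).
  exact: goodB.
by apply/funext => t; rewrite !mxE.
Qed.

Lemma goodM_tr p q (F : R -> 'M[R]_(p, q)) :
  goodM F -> goodM (fun t => (F t)^T).
Proof.
move=> gF i j; rewrite (_ : (fun t => _) = fun t => F t j i) //.
by apply/funext => t; rewrite mxE.
Qed.

Lemma goodM_tens m n p q (A : 'M[R]_(m, n)) (F : R -> 'M[R]_(p, q)) :
  goodM F -> goodM (fun t => A *t F t).
Proof.
move=> gF i j; rewrite (_ : (fun t => _) = fun t =>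
  A (mxtens_unindex i).1 (mxtens_unindex j).1 *
  F t (mxtens_unindex i).2 (mxtens_unindex j).2).
  by apply: goodMul => //; exact: good_cst.
by apply/funext => t; rewrite mxE.
Qed.

Lemma goodM_proj d (g : R -> 'cV[R]_d) :
  goodM g -> goodM (fun t => proj_orth (g t)).
Proof.
move=> gg; rewrite /proj_orth; apply: goodM_B; first exact: goodM_cst.
by apply: goodM_mul => //; exact: goodM_tr.
Qed.

End GoodM.

Section Concrete.
Variables (R : realType) (d n m : nat) (E : edge_list n m)
  (p : R -> 'cV[R]_(n * d)).
Hypothesis mp : forall r : 'I_(n * d), measurable_fun setT (fun t => p t r 0).

Lemma meas_eblock k b : measurable_fun setT (fun t => eblock E (p t) k b 0).
Proof.
rewrite (_ : (fun t => _) = fun t =>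
  \sum_j Hbar R d E (mxtens_index (k, b)) j * p t j 0).
  by apply: meas_sum => j; apply: measurable_funM => //; exact: measurable_cst.
by apply/funext => t; rewrite /eblock /evec !mxE.
Qed.

Lemma good_bearing k a : good (fun t => bearing E (p t) k a 0).
Proof.
split; last by exists 1 => t; exact: unit_le1.
rewrite (_ : (fun t => _) = fun t =>
  (enorm (eblock E (p t) k))^-1 * eblock E (p t) k a 0); last first.
  by apply/funext => t; rewrite /bearing mxE.
apply: measurable_funM; last exact: meas_eblock.
apply: measurableT_comp; first exact: measurable_inv.
rewrite /enorm; apply: measurableT_comp.
  exact: continuous_measurable_fun (@sqrt_continuous R).
apply: meas_sum => b; apply: measurable_funX; exact: meas_eblock.
Qed.

Lemma goodM_bearing k : goodM (fun t => bearing E (p t) k).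
Proof. by move=> i j; rewrite (ord1 j); exact: good_bearing. Qed.

Lemma goodM_projk k : goodM (fun t => proj_orth (bearing E (p t) k)).
Proof. exact/goodM_proj/goodM_bearing. Qed.

Lemma goodM_LapB : goodM (fun t => LapB E (p t)).
Proof.
rewrite /LapB; apply: goodM_mul; last exact: goodM_cst.
apply: goodM_mul; first exact: goodM_cst.
rewrite /PiB; apply: goodM_sum => l; apply: goodM_tens; exact: goodM_projk.
Qed.

End Concrete.


Section Alg.
Variable R : realType.
Notation mu := (@lebesgue_measure R).

Definition blk m d (y : 'cV[R]_(m * d)) (l : 'I_m) : 'cV[R]_d :=
  \col_a y (mxtens_index (l, a)) 0.

Lemma sum_tens m d (f : 'I_(m * d) -> R) :
  \sum_i f i = \sum_l \sum_a f (mxtens_index (l, a)).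
Proof.
rewrite pair_big (reindex (@mxtens_index m d)) /=; last first.
  by exists (@mxtens_unindex m d) => x _; [exact: mxtens_indexK | exact: mxtens_unindexK].
by apply: eq_bigr => -[].
Qed.

Lemma unindex1 (j : 'I_(1 * 1)) : mxtens_unindex j = (0, 0).
Proof. by case: (mxtens_unindex j) => a b; rewrite (ord1 a) (ord1 b). Qed.

Lemma PiB_entry m d (G : 'I_m -> 'M[R]_d) l l' a b :
  (\sum_k delta_mx k k *t G k) (mxtens_index (l, a)) (mxtens_index (l', b))
  = (l == l')%:R * G l a b.
Proof.
rewrite summxE (bigD1 l) //= big1 ?addr0 => [|k kl]; rewrite tensmxE mxE.
  by rewrite eqxx /= eq_sym.
by rewrite eq_sym (negbTE kl) mul0r.
Qed.

Lemma quad_PiB m d (y : 'cV[R]_(m * d)) (G : 'I_m -> 'M[R]_d) :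
  (y^T *m (\sum_k delta_mx k k *t G k) *m y) 0 0
  = \sum_l ((blk y l)^T *m G l *m blk y l) 0 0.
Proof.
rewrite quadE sum_tens; apply: eq_bigr => l _.
rewrite quadE; apply: eq_bigr => a _.
rewrite sum_tens (bigD1 l) //= [X in _ + X]big1 ?addr0 => [|l' l'l].
  by apply: eq_bigr => b _; rewrite PiB_entry eqxx mul1r !mxE.
by apply: big1 => b _; rewrite PiB_entry eq_sym (negbTE l'l) mul0r mulr0 mul0r.
Qed.

Lemma quad_id m d (y : 'cV[R]_(m * d)) :
  (y^T *m y) 0 0 = \sum_l ((blk y l)^T *m blk y l) 0 0.
Proof.
rewrite mxE sum_tens; apply: eq_bigr => l _; rewrite mxE.
by apply: eq_bigr => a _; rewrite !mxE.
Qed.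

Lemma quad_scale p (u : 'rV[R]_p) (M : 'M[R]_p) (v : 'cV[R]_p) c :
  (u *m (c *: M) *m v) 0 0 = c * (u *m M *m v) 0 0.
Proof. by rewrite -scalemxAr -scalemxAl mxE. Qed.

Lemma proj_psd d (g v : 'cV[R]_d) : \sum_a g a 0 ^+ 2 = 1 ->
  0 <= (v^T *m proj_orth g *m v) 0 0.
Proof.
move=> g1.
have gg : g^T *m g = 1%:M.
  apply/matrixP => i j; rewrite !ord1 mxE [RHS]mxE eqxx /= -g1.
  by apply: eq_bigr => a _; rewrite mxE expr2.
set P := proj_orth g.
have PT : P^T = P by rewrite /P /proj_orth linearB /= trmx1 trmx_mul trmxK.
have PP : P *m P = P.
  rewrite /P /proj_orth mulmxBl mul1mx mulmxBr mulmx1 -!mulmxA.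
  by rewrite (mulmxA (g^T)) gg mul1mx subrr subr0.
have -> : v^T *m P *m v = (P *m v)^T *m (P *m v).
  by rewrite trmx_mul PT mulmxA -(mulmxA _ P P) PP.
rewrite mxE sumr_ge0 // => a _; rewrite !mxE -expr2; exact: sqr_ge0.
Qed.

Lemma Rint_mono (a b b' : R) f : good f -> (forall t, 0 <= f t) -> b' <= b ->
  \int[mu]_(t in `[a, b']) f t <= \int[mu]_(t in `[a, b]) f t.
Proof.
move=> gf f0 bb; rewrite /Rintegral; apply: fine_le.
- by apply: integrable_fin_num => //; exact: good_integrable.
- by apply: integrable_fin_num => //; exact: good_integrable.
apply: ge0_subset_integral => //.
- apply/measurable_EFinP; apply: measurable_funTS; exact: gf.1.
- by move=> x _; rewrite lee_fin.
- move=> x /=; rewrite !in_itv /= => /andP[-> h]; exact: le_trans h bb.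
Qed.

End Alg.


Lemma sum_ind (R : realType) n (x : 'I_n) (f : 'I_n -> R) :
  \sum_i (i == x)%:R * f i = f x.
Proof.
rewrite (bigD1 x) //= eqxx mul1r big1 ?addr0 // => i /negbTE ->.
by rewrite mul0r.
Qed.

Lemma cut_vector (R : realType) n m (E : edge_list n m) k :
  simple_graph E -> acyclic E ->
  exists w : 'cV[R]_n, incidence R E *m w = delta_mx k 0.
Proof.
case=> [noloop nopar] acyc.
set S := ~: [set k].
set h := (E k).2; set tl := (E k).1.
have symA : connect_sym (adj_in E S).
  apply: sym_connect_sym => u v.
  by apply/existsP/existsP => -[l /andP[lS hl]]; exists l; rewrite lS orbC.
have Ek : E k = (tl, h) by rewrite /tl /h; case: (E k).
have key : ~~ connect (adj_in E S) h tl.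
  apply/negP => /connectP [s hp htl].
  case: (shortenP hp) htl => s' hp' hu _ htl.
  have htl0 : h != tl by rewrite eq_sym; exact: noloop k.
  move: hu hp' htl; case: s' => [|v s'] hu hp' htl.
    by move: htl0; rewrite htl /= eqxx.
  case: s' hu hp' htl => [|v' s''] hu hp' htl.
    move: hp' => /= /andP[/existsP [l /andP [lS hl]] _].
    rewrite /= in htl; rewrite -htl in hl.
    have lk : k != l by move: lS; rewrite !inE eq_sym.
    case/orP: hl => /eqP El; apply: (nopar k l lk).
      by right; rewrite Ek El.
    by left; rewrite Ek El.
  have hc : cycle (adj_in E [set: 'I_m]) (h :: [:: v, v' & s'']).
    rewrite /cycle rcons_path; apply/andP; split.
      apply: sub_path hp' => x y /existsP [l /andP [_ hl]].
      by apply/existsP; exists l; rewrite inE.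
    by rewrite -htl; apply/existsP; exists k; rewrite inE Ek eqxx.
  by move: (acyc _ hu isT); rewrite hc.
exists (\col_v (connect (adj_in E S) h v)%:R).
apply/matrixP => l j; rewrite (ord1 j) !mxE.
under eq_bigr do rewrite !mxE mulrBl.
rewrite sumrB !sum_ind.
have [->|lk] := eqVneq l k.
  by rewrite -/h -/tl connect0 (negbTE key) eqxx subr0.
have al : adj_in E S (E l).1 (E l).2.
  apply/existsP; exists l; rewrite !inE lk /=.
  by case: (E l) => ? ? /=; rewrite eqxx.
by rewrite (symA h (E l).2) (symA h (E l).1) (same_connect1 symA al) subrr.
Qed.


Lemma quad_gram (R : realType) p q (A : 'M[R]_(p, q)) (B : 'M[R]_p) (x : 'cV[R]_q) :
  x^T *m (A^T *m B *m A) *m x = (A *m x)^T *m B *m (A *m x).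
Proof. by rewrite trmx_mul !mulmxA. Qed.

Lemma quad_gram1 (R : realType) p q (A : 'M[R]_(p, q)) (x : 'cV[R]_q) :
  x^T *m (A^T *m A) *m x = (A *m x)^T *m (A *m x).
Proof. by rewrite trmx_mul !mulmxA. Qed.

Lemma good_quad (R : realType) p (F : R -> 'M[R]_p) (u : 'rV[R]_p) (v : 'cV[R]_p) :
  goodM F -> good (fun t => (u *m F t *m v) 0 0).
Proof.
move=> gF; apply: (goodM_mul (F := fun t => u *m F t)).
  by apply: goodM_mul => //; exact: goodM_cst.
exact: goodM_cst.
Qed.

Lemma sq_ge0 (R : realType) d (b : 'cV[R]_d) : 0 <= (b^T *m b) 0 0.
Proof. by rewrite mxE sumr_ge0 // => a _; rewrite mxE -expr2 sqr_ge0. Qed.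

Theorem lemma4 (R : realType) (d n m : nat) (E : edge_list n m)
  (p : R -> 'cV[R]_(n * d)) :
  (2 <= d)%N -> (2 <= n)%N ->
  simple_graph E -> acyclic E -> has_spanning_tree E ->
  (forall r : 'I_(n * d), measurable_fun setT (fun t => p t r 0)) ->
  (forall (t : R) (k : 'I_m), eblock E (p t) k != 0) ->
  BPE E p <-> (forall k : 'I_m, PE_dir (fun t => bearing E (p t) k)).
Proof.
move=> _ _ hsimp hacyc hst mp hne.
have unitk : forall t k, \sum_a bearing E (p t) k a 0 ^+ 2 = 1.
  by move=> t k; exact: unit_sum (hne t k).
split.
- case=> _ [T [mu [T0 [mu0 hPE]]]] k.
  have [w hw] := cut_vector R k hsimp hacyc.
  exists T, mu; do 2 split => //; move=> t; rewrite /loewner_ge => z.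
  pose x : 'cV[R]_(n * d) := w *t z.
  have hy : Hbar R d E *m x = (delta_mx k (0 : 'I_1) *t z : 'cV_(m * d)).
    by have := tensmx_mul (incidence R E) (1%:M : 'M[R]_d) w z; rewrite hw mul1mx.
  have hb : forall l, blk (Hbar R d E *m x) l = (l == k)%:R *: z.
    move=> l; apply/matrixP => a j; rewrite (ord1 j) hy !mxE mxtens_indexK.
    by rewrite unindex1 /= andbT.
  have e1 : (x^T *m Lap R d E *m x) 0 0 = (z^T *m z) 0 0.
    rewrite /Lap quad_gram1 quad_id; under eq_bigr do rewrite hb.
    rewrite (bigD1 k) //= eqxx scale1r [X in _ + X]big1 ?addr0 // => l /negbTE ->.
    by rewrite scale0r trmx0 mul0mx mxE.
  have e2 : forall tau, (x^T *m LapB E (p tau) *m x) 0 0 =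
      (z^T *m proj_orth (bearing E (p tau) k) *m z) 0 0.
    move=> tau; rewrite /LapB quad_gram /PiB quad_PiB.
    under eq_bigr do rewrite hb.
    rewrite (bigD1 k) //= eqxx scale1r [X in _ + X]big1 ?addr0 // => l /negbTE ->.
    by rewrite scale0r trmx0 !mul0mx mxE.
  move: (hPE t x); rewrite quad_scale e1 (mxint_quad _ _ _ _ (goodM_LapB E mp)).
  under eq_Rintegral do rewrite e2.
  by rewrite -(mxint_quad _ _ _ _ (goodM_projk E mp k)) quad_scale mulmx1.
- move=> hk; split => //.
  have [Tf hTf] := choice hk.
  have [muf hmuf] := choice hTf.
  pose T := 1 + \sum_k Tf k.
  pose mu := (1 + \sum_k (muf k)^-1)^-1.
  have TS0 : 0 <= \sum_k Tf k.
    by apply: sumr_ge0 => k _; exact: ltW (hmuf k).1.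
  have MS0 : 0 <= \sum_k (muf k)^-1.
    by apply: sumr_ge0 => k _; rewrite invr_ge0; exact: ltW (hmuf k).2.1.
  have Tk : forall k, Tf k <= T.
    move=> k; rewrite /T (bigD1 k) //=.
    have : 0 <= \sum_(i | i != k) Tf i.
      by apply: sumr_ge0 => i _; exact: ltW (hmuf i).1.
    lra.
  have T0 : 0 < T by rewrite /T; lra.
  have mu0 : 0 < mu by rewrite /mu invr_gt0; lra.
  have muk : forall k, mu <= muf k.
    move=> k; rewrite /mu -[muf k]invrK lef_pV2 ?posrE ?invr_gt0 //; last first.
      - exact: (hmuf k).2.1.
      - lra.
    rewrite (bigD1 k) //=.
    have : 0 <= \sum_(i | i != k) (muf i)^-1.
      by apply: sumr_ge0 => i _; rewrite invr_ge0; exact: ltW (hmuf i).2.1.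
    lra.
  exists T, mu; do 2 split => //; move=> t; rewrite /loewner_ge => x.
  rewrite quad_scale /Lap quad_gram1 quad_id.
  rewrite (mxint_quad _ _ _ _ (goodM_LapB E mp)).
  under eq_Rintegral do rewrite /LapB quad_gram /PiB quad_PiB.
  rewrite Rint_sum; last by move=> l; apply: good_quad; exact: goodM_projk.
  rewrite mulr_sumr; apply: ler_sum => l _.
  set b := blk _ l.
  have hTl : t + Tf l <= t + T by rewrite lerD2l.
  apply: le_trans (Rint_mono t (good_quad b^T b (goodM_projk E mp l))
    (fun tau => proj_psd b (unitk tau l)) hTl).
  rewrite -(mxint_quad _ _ _ _ (goodM_projk E mp l)).
  have h := (hmuf l).2.2 t b; rewrite quad_scale mulmx1 in h.
  apply: le_trans h; rewrite ler_wpM2r //; first exact: sq_ge0.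
Qed.
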